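(* Let $\mathbf a=\{a_k\}_{k\ge0}$ with $\operatorname{Im}a_k>0$ have no limit points on the real axis $\mathbb R$, satisfy $\lim_{n\to\infty}\sigma_n=+\infty$, and satisfy $\varsigma_n/\sigma_n\le C$ for all $n\ge1$ with a constant $C$. Then for every $\delta>0$ and every $x\in\mathbb R$, $$\lim_{n\to\infty}\int_0^\delta\frac{\sin\big(y\,\mu_n(y;x)\big)}{y}\,dy=\frac\pi2\quad\text{and}\quad\lim_{n\to\infty}\int_0^\delta\frac{\sin\big(y\,\mu_n(-y;x)\big)}{y}\,dy=\frac\pi2.$$
   Context: For $y\ne0$, $x\in\mathbb R$: $\mu_n(y;x):=\frac1y\int_x^{x+y}\sum_{k=0}^{n-1}\frac{2\operatorname{Im}a_k}{(u-\operatorname{Re}a_k)^2+(\operatorname{Im}a_k)^2}\,du$. $\sigma_n:=\sum_{k=0}^{n-1}\frac{|\operatorname{Im}a_k|}{1+|a_k|^2}$, $\varsigma_n:=\sum_{k=0}^{n-1}\frac{1}{(\operatorname{Im}a_k)^2}$. ''No limit points on $\mathbb R$'' means no subsequence of $\{a_k\}$ converges to a real number. *)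

(* Defs.v *)
From Stdlib Require Import Reals Lra ClassicalEpsilon.
Open Scope R_scope.

(* Total Riemann integral: the (signed) Riemann integral of f from a to b
   when f is Riemann integrable there, and 0 otherwise. *)
Definition Rint (f : R -> R) (a b : R) : R :=
  match excluded_middle_informative (exists pr : Riemann_integrable f a b, True) with
  | left H => RiemannInt (proj1_sig (constructive_indefinite_description _ H))
  | right _ => 0
  end.

Fixpoint psum (f : nat -> R) (n : nat) : R :=
  match n with
  | O => 0
  | S m => psum f m + f m
  end.

(* The sequence a_k is given by its real parts re k and imaginary parts im k. *)

Definition mu_n (re im : nat -> R) (n : nat) (y x : R) : R :=
  / y * Rint (fun u => psum (fun k => 2 * im k / ((u - re k) ^ 2 + (im k) ^ 2)) n)
             x (x + y).

Definition sigma_n (re im : nat -> R) (n : nat) : R :=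
  psum (fun k => Rabs (im k) / (1 + (re k ^ 2 + im k ^ 2))) n.

Definition varsigma_n (im : nat -> R) (n : nat) : R :=
  psum (fun k => / (im k ^ 2)) n.

Definition no_real_limit_points (re im : nat -> R) : Prop :=
  forall (phi : nat -> nat) (r : R),
    (forall j, (phi j < phi (S j))%nat) ->
    ~ (Un_cv (fun j => re (phi j)) r /\ Un_cv (fun j => im (phi j)) 0).

(* Main.v *)
Require Import Defs.
From Stdlib Require Import Reals.
From Stdlib Require Import Lra Lia ClassicalEpsilon FunctionalExtensionality.
From Coquelicot Require Import Coquelicot.
Open Scope R_scope.

Definition sinc (t : R) : R := if Req_EM_T t 0 then 1 else sin t / t.

Lemma cont_cpt f x : continuity_pt f x -> continuous f x.
Proof. intros H; apply continuity_pt_filterlim; exact H. Qed.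

Lemma exd_cont (f : R -> R) x : ex_derive f x -> continuous f x.
Proof. intros H. apply (ex_derive_continuous f x H). Qed.

Lemma exRI_cont (f : R -> R) a b :
  (forall z, Rmin a b <= z <= Rmax a b -> continuous f z) -> ex_RInt f a b.
Proof. intros H. apply (ex_RInt_continuous (V:=R_CompleteNormedModule)); exact H. Qed.

Lemma RI_derive (f df : R -> R) a b :
  (forall x, Rmin a b <= x <= Rmax a b -> is_derive f x (df x)) ->
  (forall x, Rmin a b <= x <= Rmax a b -> continuous df x) ->
  RInt df a b = f b - f a.
Proof. intros H1 H2. apply (is_RInt_unique (V:=R_CompleteNormedModule)).
  apply (is_RInt_derive (V:=R_CompleteNormedModule)); auto. Qed.

Lemma RI_ext (f g : R -> R) a b :
  (forall x, Rmin a b < x < Rmax a b -> f x = g x) -> RInt f a b = RInt g a b.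
Proof. apply (RInt_ext (V:=R_CompleteNormedModule)). Qed.

Lemma exRI_ext (f g : R -> R) a b :
  (forall x, Rmin a b < x < Rmax a b -> f x = g x) -> ex_RInt f a b -> ex_RInt g a b.
Proof. apply (ex_RInt_ext (V:=R_NormedModule)). Qed.

Lemma RI_Chasles (f : R -> R) a b c : ex_RInt f a b -> ex_RInt f b c ->
  RInt f a b + RInt f b c = RInt f a c.
Proof. apply (RInt_Chasles (V:=R_CompleteNormedModule)). Qed.

Lemma exRI_Ch1 (f : R -> R) a b c : a <= b <= c -> ex_RInt f a c -> ex_RInt f a b.
Proof. apply (ex_RInt_Chasles_1 (V:=R_CompleteNormedModule)). Qed.
Lemma exRI_Ch2 (f : R -> R) a b c : a <= b <= c -> ex_RInt f a c -> ex_RInt f b c.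
Proof. apply (ex_RInt_Chasles_2 (V:=R_CompleteNormedModule)). Qed.

Lemma locally_neq0 t : t <> 0 -> locally t (fun y => y <> 0).
Proof.
  intros Ht. assert (Hp : 0 < Rabs t) by (apply Rabs_pos_lt; auto).
  exists (mkposreal _ Hp). intros y Hy. unfold ball in Hy; simpl in Hy.
  unfold AbsRing_ball, abs, minus, plus, opp in Hy; simpl in Hy.
  intros E; subst y. rewrite Rplus_0_l, Rabs_Ropp in Hy. lra.
Qed.

Lemma sinc_cont t : continuous sinc t.
Proof.
  destruct (Req_EM_T t 0) as [->|Ht].
  - apply cont_cpt. intros eps Heps.
    destruct (derivable_pt_lim_sin 0 eps Heps) as [d Hd].
    exists d. split; [apply cond_pos|]. intros x [[_ Hx0] Hx]. 
    unfold dist in Hx; simpl in Hx; unfold R_dist in Hx.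
    specialize (Hd x (not_eq_sym Hx0) ltac:(rewrite Rminus_0_r in Hx; exact Hx)).
    unfold dist; simpl; unfold R_dist, sinc.
    destruct (Req_EM_T x 0) as [E|_]; [exfalso; auto|].
    destruct (Req_EM_T 0 0) as [_|E]; [|exfalso; auto].
    rewrite cos_0, sin_0, Rplus_0_l, Rminus_0_r in Hd. exact Hd.
  - apply continuous_ext_loc with (g := fun y => sin y / y).
    + destruct (locally_neq0 t Ht) as [e He]. exists e. intros y Hy.
      specialize (He y Hy).
      unfold sinc. destruct (Req_EM_T y 0); [contradiction|reflexivity].
    + apply exd_cont. auto_derive. exact Ht.
Qed.

Lemma abs_sin_le t : Rabs (sin t) <= Rabs t.
Proof.
  assert (H: forall t, 0 <= t -> Rabs (sin t) <= t).
  { intros u Hu. 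
    assert (Hi : RInt cos 0 u = sin u - sin 0).
    { apply (RI_derive sin cos). intros; apply is_derive_Reals, derivable_pt_lim_sin.
      intros; apply exd_cont; auto_derive; auto. }
    rewrite sin_0, Rminus_0_r in Hi. rewrite <- Hi.
    replace u with ((u - 0) * 1) at 2 by ring.
    apply abs_RInt_le_const; auto.
    - apply exRI_cont; intros; apply exd_cont; auto_derive; auto.
    - intros; apply Rabs_le; generalize (COS_bound t0); lra. }
  destruct (Rle_or_lt 0 t).
  - rewrite (Rabs_pos_eq t); auto.
  - rewrite <- (Ropp_involutive t), sin_neg, Rabs_Ropp, Rabs_Ropp.
    rewrite (Rabs_pos_eq (-t)) by lra. apply H; lra.
Qed.

Lemma sinc_bound t : Rabs (sinc t) <= 1.
Proof.
  unfold sinc. destruct (Req_EM_T t 0).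
  - rewrite Rabs_R1; lra.
  - unfold Rdiv; rewrite Rabs_mult, Rabs_inv.
    apply (Rmult_le_reg_r (Rabs t)); [apply Rabs_pos_lt; auto|].
    rewrite Rmult_assoc, Rinv_l, Rmult_1_r, Rmult_1_l; [apply abs_sin_le|].
    apply Rabs_no_R0; auto.
Qed.

Lemma sinc_mul t : t * sinc t = sin t.
Proof. unfold sinc. destruct (Req_EM_T t 0) as [->|H]. rewrite sin_0; ring. field; auto. Qed.

Ltac fR := match goal with |- @eq _ ?a ?b => change (@eq R a b) end.

Definition hp (a t : R) := exp (-(a*t)) * sinc t.
Definition FX (X a : R) := RInt (hp a) 0 X.
Definition Si (X : R) := RInt sinc 0 X.

Lemma loc_all (x : R) (P : R -> Prop) : (forall y, P y) -> locally x P.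
Proof. intros H. exists (mkposreal 1 Rlt_0_1). intros; apply H. Qed.

Lemma Dhp u v : is_derive (fun z => hp z v) u (-(exp (-(u*v)) * sin v)).
Proof. unfold hp. rewrite <- sinc_mul. auto_derive; auto. ring. Qed.

Lemma cpt_exp x : continuity_pt exp x.
Proof. apply derivable_continuous_pt, derivable_pt_exp. Qed.
Lemma cpt_sin x : continuity_pt sin x.
Proof. apply derivable_continuous_pt, derivable_pt_sin. Qed.

Lemma hp_cont a t : continuous (hp a) t.
Proof.
  unfold hp. apply (continuous_mult (K:=R_AbsRing)).
  - apply exd_cont. auto_derive; auto.
  - apply sinc_cont.
Qed.

Lemma FX_derive X a :
  is_derive (FX X) a ((exp (-(a*X)) * (a * sin X + cos X) - 1) / (1 + a^2)).
Proof.
  unfold FX.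
  assert (H := is_derive_RInt_param hp 0 X a).
  assert (E : RInt (fun t => Derive (fun u => hp u t) a) 0 X =
              (exp (-(a*X)) * (a * sin X + cos X) - 1) / (1 + a^2)).
  { rewrite (RI_ext _ (fun t => -(exp (-(a*t)) * sin t))).
    2:{ intros; apply is_derive_unique, Dhp. }
    rewrite (RI_derive (fun t => exp (-(a*t)) * (a * sin t + cos t) / (1 + a^2))).
    - rewrite Rmult_0_r, Ropp_0, exp_0, sin_0, cos_0. change (@eq R (exp (- (a * X)) * (a * sin X + cos X) / (1 + a ^ 2) - 1 * (a * 0 + 1) / (1 + a ^ 2)) ((exp (- (a * X)) * (a * sin X + cos X) - 1) / (1 + a ^ 2))). field.
      apply Rgt_not_eq. nra.
    - intros t0 _. auto_derive; auto. field. apply Rgt_not_eq; nra.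
    - intros t0 _. apply exd_cont. auto_derive; auto. }
  rewrite <- E. apply H.
  - apply loc_all. intros y t _. eexists; apply Dhp.
  - intros t _. apply continuity_2d_pt_ext with (f := fun u v => -(exp (-(u*v)) * sin v)).
    { intros u v; symmetry; apply is_derive_unique, Dhp. }
    apply continuity_2d_pt_opp, continuity_2d_pt_mult.
    + apply continuity_1d_2d_pt_comp. apply cpt_exp.
      apply continuity_2d_pt_opp, continuity_2d_pt_mult; [apply continuity_2d_pt_id1|apply continuity_2d_pt_id2].
    + apply continuity_1d_2d_pt_comp. apply cpt_sin. apply continuity_2d_pt_id2.
  - apply loc_all. intros y. apply exRI_cont. intros; apply hp_cont.
Qed.

Lemma RI_abs_bound (f g : R -> R) a b : a <= b -> ex_RInt f a b -> ex_RInt g a b ->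
  (forall t, a < t < b -> Rabs (f t) <= g t) -> Rabs (RInt f a b) <= RInt g a b.
Proof.
  intros Hab Hf Hg H. apply Rabs_le. split.
  - assert (E : RInt (fun t => - g t) a b = - RInt g a b).
    { apply (RInt_opp (V:=R_CompleteNormedModule)); auto. }
    rewrite <- E. apply RInt_le; auto.
    + apply (ex_RInt_opp (V:=R_NormedModule)); auto.
    + intros t Ht. specialize (H t Ht). apply Rabs_le_between in H. lra.
  - apply RInt_le; auto. intros t Ht. specialize (H t Ht).
    apply Rabs_le_between in H. lra.
Qed.

Lemma RI_exp A X : 0 < A -> RInt (fun t => exp (-(A*t))) 0 X = (1 - exp (-(A*X))) / A.
Proof.
  intros HA. rewrite (RI_derive (fun t => - exp (-(A*t)) / A)).
  - rewrite Rmult_0_r, Ropp_0, exp_0. fR. field. lra.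
  - intros t _. auto_derive; auto. field. lra.
  - intros t _. apply exd_cont. auto_derive; auto.
Qed.

Lemma exRI_exp A X : ex_RInt (fun t => exp (-(A*t))) 0 X.
Proof. apply exRI_cont. intros; apply exd_cont; auto_derive; auto. Qed.

Lemma FX0 X : FX X 0 = Si X.
Proof. unfold FX, Si. apply RI_ext. intros; unfold hp. rewrite Rmult_0_l, Ropp_0, exp_0; ring. Qed.

Lemma FX_bound X A : 0 < A -> 0 < X -> Rabs (FX X A) <= 1 / A.
Proof.
  intros HA HX. unfold FX.
  eapply Rle_trans.
  - apply (RI_abs_bound _ (fun t => exp (-(A*t)))); [lra| | |].
    + apply exRI_cont; intros; apply hp_cont.
    + apply exRI_exp.
    + intros t _. unfold hp. rewrite Rabs_mult, (Rabs_pos_eq (exp _)) by (apply Rlt_le, exp_pos).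
      generalize (sinc_bound t) (exp_pos (-(A*t))). nra.
  - rewrite RI_exp by auto. generalize (exp_pos (-(A*X))).
    intros. unfold Rdiv. apply Rmult_le_compat_r. apply Rlt_le, Rinv_0_lt_compat; auto. lra.
Qed.

Definition Qf (X a : R) := exp (-(a*X)) * (a * sin X + cos X) / (1 + a^2).

Lemma Qf_int X A : RInt (Qf X) 0 A = FX X A + atan A - FX X 0.
Proof.
  rewrite (RI_derive (fun a => FX X a + atan a)).
  - rewrite atan_0. fR. ring.
  - intros a _. unfold Qf.
    replace (exp (- (a * X)) * (a * sin X + cos X) / (1 + a ^ 2)) with
      (plus ((exp (-(a*X)) * (a * sin X + cos X) - 1) / (1 + a^2)) (/ (1 + a^2))).
    + apply (is_derive_plus (K:=R_AbsRing) (V:=R_NormedModule)). apply FX_derive.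
      apply is_derive_Reals, derivable_pt_lim_atan.
    + unfold plus; simpl. field. apply Rgt_not_eq; nra.
  - intros a _. apply exd_cont. unfold Qf. auto_derive. apply Rgt_not_eq; nra.
Qed.

Lemma Qf_bound X A : 0 <= A -> 0 < X -> Rabs (RInt (Qf X) 0 A) <= 2 / X.
Proof.
  intros HA HX.
  eapply Rle_trans.
  - apply (RI_abs_bound _ (fun a => 2 * exp (-(X*a)))); [lra| | |].
    + apply exRI_cont; intros; apply exd_cont; unfold Qf; auto_derive; apply Rgt_not_eq; nra.
    + apply exRI_cont; intros; apply exd_cont; auto_derive; auto.
    + intros a Ha. unfold Qf. unfold Rdiv. rewrite !Rabs_mult.
      rewrite (Rabs_pos_eq (exp _)) by (apply Rlt_le, exp_pos).
      rewrite (Rabs_pos_eq (/ _)) by (apply Rlt_le, Rinv_0_lt_compat; nra).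
      rewrite (Rmult_comm a X).
      assert (H1 : Rabs (a * sin X + cos X) <= a + 1).
      { eapply Rle_trans; [apply Rabs_triang|]. rewrite Rabs_mult, (Rabs_pos_eq a) by lra.
        generalize (Rabs_le_between (sin X) 1) (Rabs_le_between (cos X) 1).
        generalize (SIN_bound X) (COS_bound X). intros. 
        assert (Rabs (sin X) <= 1) by (apply Rabs_le; lra).
        assert (Rabs (cos X) <= 1) by (apply Rabs_le; lra). nra. }
      assert (H2 : (a + 1) * / (1 + a^2) <= 2).
      { apply (Rmult_le_reg_r (1 + a^2)); [nra|]. rewrite Rmult_assoc, Rinv_l by (apply Rgt_not_eq; nra). nra. }
      generalize (exp_pos (-(X*a))) (Rabs_pos (a * sin X + cos X)). intros He Hp.
      assert (0 < / (1 + a^2)) by (apply Rinv_0_lt_compat; nra).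
      assert (H3 : Rabs (a * sin X + cos X) * / (1 + a^2) <= 2).
      { eapply Rle_trans; [|exact H2]. apply Rmult_le_compat_r; lra. }
      rewrite Rmult_assoc. rewrite (Rmult_comm 2). apply Rmult_le_compat_l; lra.
  - assert (E : RInt (fun a => 2 * exp (-(X*a))) 0 A = 2 * ((1 - exp (-(X*A))) / X)).
    { rewrite <- RI_exp by auto. 
      apply (RInt_scal (V:=R_CompleteNormedModule) (fun a => exp (-(X*a)))). apply exRI_exp. }
    rewrite E. generalize (exp_pos (-(X*A))). intros.
    unfold Rdiv. assert (0 < /X) by (apply Rinv_0_lt_compat; auto). nra.
Qed.

Lemma Si_bound X : 0 < X -> Rabs (Si X - PI/2) <= 2 / X.
Proof.
  intros HX. apply Rle_plus_epsilon. intros eps Heps.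
  set (e := Rmin (eps/2) (PI/4)).
  assert (He : 0 < e) by (unfold e; apply Rmin_glb_lt; generalize PI_RGT_0; lra).
  assert (He2 : e <= eps/2) by apply Rmin_l.
  assert (He3 : e <= PI/4) by apply Rmin_r.
  set (A1 := tan (PI/2 - e)).
  assert (HA1 : 0 < A1) by (apply tan_gt_0; generalize PI_RGT_0; lra).
  assert (Hat1 : atan A1 = PI/2 - e) by (apply atan_tan; generalize PI_RGT_0; lra).
  set (A := Rmax A1 (2/eps)).
  assert (HA : A1 <= A) by apply Rmax_l.
  assert (HA' : 2/eps <= A) by apply Rmax_r.
  assert (HA0 : 0 < A) by lra.
  assert (Hat : PI/2 - e <= atan A).
  { rewrite <- Hat1. destruct (Req_dec A1 A) as [E|]; [rewrite E; lra|]. apply Rlt_le, atan_increasing; lra. }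
  assert (Hat2 := atan_bound A).
  assert (H1 := FX_bound X A HA0 HX).
  assert (H2 := Qf_bound X A (Rlt_le _ _ HA0) HX).
  rewrite Qf_int, FX0 in H2.
  assert (H3 : 1 / A <= eps / 2).
  { unfold Rdiv. apply (Rmult_le_reg_r A); auto. rewrite Rmult_assoc, Rinv_l by lra.
    apply (Rmult_le_reg_l (2/eps)). apply Rdiv_lt_0_compat; lra.
    replace (2 / eps * (eps * / 2 * A)) with A by (field; lra). lra. }
  apply Rabs_le_between in H1. apply Rabs_le_between in H2.
  apply Rabs_le. lra.
Qed.

Lemma RI_minus (f g : R -> R) a b : ex_RInt f a b -> ex_RInt g a b ->
  RInt (fun x => f x - g x) a b = RInt f a b - RInt g a b.
Proof. apply (RInt_minus (V:=R_CompleteNormedModule)). Qed.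
Lemma exRI_minus (f g : R -> R) a b : ex_RInt f a b -> ex_RInt g a b ->
  ex_RInt (fun x => f x - g x) a b.
Proof. apply (ex_RInt_minus (V:=R_NormedModule)). Qed.
Lemma RI_const a b c : RInt (fun _ => c) a b = (b - a) * c.
Proof. apply (RInt_const (V:=R_CompleteNormedModule)). Qed.
Lemma RI_point (f : R -> R) a : RInt f a a = 0.
Proof. apply (RInt_point (V:=R_CompleteNormedModule)). Qed.
Lemma D_comp (f g : R -> R) x df dg : is_derive f (g x) df -> is_derive g x dg ->
  is_derive (fun y => f (g y)) x (dg * df).
Proof. apply (is_derive_comp (K:=R_AbsRing) (V:=R_NormedModule)). Qed.
Lemma c_mult (f g : R -> R) x : continuous f x -> continuous g x -> continuous (fun y => f y * g y) x.
Proof. apply (continuous_mult (K:=R_AbsRing)). Qed.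
Lemma c_comp (f g : R -> R) x : continuous f x -> continuous g (f x) -> continuous (fun y => g (f y)) x.
Proof. apply (continuous_comp (U:=R_UniformSpace) (V:=R_UniformSpace) (W:=R_UniformSpace)). Qed.
Lemma c_plus (f g : R -> R) x : continuous f x -> continuous g x -> continuous (fun y => f y + g y) x.
Proof. apply (continuous_plus (K:=R_AbsRing) (V:=R_NormedModule)). Qed.

Lemma D_RInt (g : R -> R) (Hg : forall y, continuous g y) y :
  is_derive (fun z => RInt g 0 z) y (g y).
Proof.
  apply (is_derive_RInt (V:=R_NormedModule) g (fun z => RInt g 0 z) 0 y).
  - apply loc_all. intros b. apply (RInt_correct (V:=R_CompleteNormedModule)).
    apply exRI_cont; auto.
  - apply Hg.
Qed.

(* Sx: the integrand, extended by continuity at 0 *)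
Definition Sx (g : R -> R) (y : R) : R :=
  if Req_EM_T y 0 then g 0 else sin (RInt g 0 y) / y.

Lemma Sx_cont (g : R -> R) (Hg : forall y, continuous g y) y : continuous (Sx g) y.
Proof.
  destruct (Req_EM_T y 0) as [->|Hy].
  - apply cont_cpt. intros eps Heps.
    assert (HD : is_derive (fun z => sin (RInt g 0 z)) 0 (g 0 * cos (RInt g 0 0))).
    { apply D_comp. apply is_derive_Reals, derivable_pt_lim_sin. apply D_RInt; auto. }
    apply is_derive_Reals in HD.
    destruct (HD eps Heps) as [d Hd].
    exists d. split; [apply cond_pos|]. intros x [[_ Hx0] Hx].
    unfold dist in Hx; simpl in Hx; unfold R_dist in Hx.
    specialize (Hd x (not_eq_sym Hx0) ltac:(rewrite Rminus_0_r in Hx; exact Hx)).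
    unfold dist; simpl; unfold R_dist, Sx.
    destruct (Req_EM_T x 0) as [E|_]; [exfalso; auto|].
    destruct (Req_EM_T 0 0) as [_|E]; [|exfalso; auto].
    rewrite RI_point, cos_0, sin_0, Rplus_0_l, Rminus_0_r, Rmult_1_r in Hd. exact Hd.
  - apply continuous_ext_loc with (g := fun z => sin (RInt g 0 z) / z).
    + destruct (locally_neq0 y Hy) as [e He]. exists e. intros z Hz.
      specialize (He z Hz).
      unfold Sx. destruct (Req_EM_T z 0); [contradiction|reflexivity].
    + apply exd_cont. eexists.
      apply (is_derive_mult (K:=R_AbsRing) (fun z => sin (RInt g 0 z)) (fun z => / z)).
      * apply D_comp. apply is_derive_Reals, derivable_pt_lim_sin. apply D_RInt; auto.
      * apply is_derive_inv; [|exact Hy]. apply (is_derive_id (K:=R_AbsRing)).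
      * intros; apply Rmult_comm.
Qed.

Lemma Sx_int (g : R -> R) (Hg : forall y, continuous g y) a b : ex_RInt (Sx g) a b.
Proof. apply exRI_cont. intros; apply Sx_cont; auto. Qed.

Lemma lip (g g' : R -> R) a b L :
  (forall y, is_derive g y (g' y)) -> (forall y, continuous g' y) ->
  (forall t, a <= t <= b -> Rabs (g' t) <= L) ->
  forall s y, a <= s <= b -> a <= y <= b -> Rabs (g y - g s) <= L * Rabs (y - s).
Proof.
  intros Hd Hc HL.
  assert (K : forall s y, a <= s <= y -> y <= b -> Rabs (g y - g s) <= L * (y - s)).
  { intros s y H1 H2. rewrite <- (RI_derive g g').
    - rewrite Rmult_comm. apply abs_RInt_le_const; [lra| |].
      + apply exRI_cont; auto.
      + intros t Ht; apply HL; lra.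
    - intros; apply Hd.
    - intros; apply Hc. }
  intros s y Hs Hy. destruct (Rle_or_lt s y).
  - rewrite (Rabs_pos_eq (y - s)) by lra. apply K; lra.
  - rewrite <- Rabs_Ropp, Ropp_minus_distr, <- (Rabs_Ropp (y - s)), Ropp_minus_distr.
    rewrite (Rabs_pos_eq (s - y)) by lra. apply K; lra.
Qed.

Lemma c_inv (f : R -> R) x : continuous f x -> f x <> 0 -> continuous (fun y => / f y) x.
Proof. apply continuous_Rinv_comp. Qed.

Lemma D_eq (f : R -> R) x l l' : is_derive f x l -> l = l' -> is_derive f x l'.
Proof. intros H ->; exact H. Qed.

Lemma D_mult (f g : R -> R) x df dg : is_derive f x df -> is_derive g x dg ->
  is_derive (fun y => f y * g y) x (df * g x + f x * dg).
Proof. intros; apply (is_derive_mult (K:=R_AbsRing)); auto. intros; apply Rmult_comm. Qed.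

Lemma AL (g g' : R -> R) d M eps :
  (forall y, is_derive g y (g' y)) -> (forall y, continuous g' y) -> 0 < d -> 0 <= M ->
  (forall y z, 0 <= y <= d -> 0 <= z <= d -> Rabs (g' y) <= M * g z) -> 0 < g 0 ->
  0 < eps <= d ->
  Rabs (RInt (Sx g) 0 d - PI/2) <=
    eps * (M * (1 + M * d)) + (4 / eps + d * (1 + M * d) / eps ^ 2) * ((1 + M * d) / g 0).
Proof.
  intros Hd Hc Hd0 HM Hb Hm Heps.
  set (P := 1 + M * d). set (m := g 0). set (gm := m / P).
  assert (HP : 1 <= P) by (unfold P; nra).
  assert (Hgc : forall y, continuous g y) by (intros; apply exd_cont; eexists; apply Hd).
  assert (Hgm : 0 < gm) by (unfold gm; apply Rdiv_lt_0_compat; [exact Hm|lra]).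
  assert (Hlow : forall z, 0 <= z <= d -> gm <= g z).
  { intros z Hz.
    assert (H1 := lip g g' 0 d (M * g z) Hd Hc (fun t Ht => Hb t z Ht Hz) 0 z ltac:(lra) Hz).
    assert (H2 : 0 <= M * g z) by (eapply Rle_trans; [apply Rabs_pos|apply (Hb 0 z)]; lra).
    rewrite Rminus_0_r, (Rabs_pos_eq z) in H1 by lra.
    apply Rabs_le_between in H1.
    unfold gm, Rdiv. apply (Rmult_le_reg_r P); [lra|].
    rewrite Rmult_assoc, Rinv_l, Rmult_1_r by lra. unfold m, P.
    assert (M * g z * z <= M * g z * d) by (apply Rmult_le_compat_l; lra). nra. }
  set (T := fun y => RInt g 0 y).
  assert (HT0 : T 0 = 0) by apply RI_point.
  assert (HTc : forall y, continuous T y) by (intros; apply exd_cont; eexists; apply D_RInt; auto).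
  assert (HTl : forall y, 0 <= y <= d -> y * gm <= T y).
  { intros y Hy. unfold T. rewrite <- (Rminus_0_r y) at 1. rewrite <- RI_const.
    apply RInt_le; try lra.
    - apply exRI_cont; intros; apply exd_cont; auto_derive; auto.
    - apply exRI_cont; auto.
    - intros; apply Hlow; lra. }
  assert (Hsplit : RInt (Sx g) 0 d = RInt (Sx g) 0 eps + RInt (Sx g) eps d).
  { symmetry; apply RI_Chasles; apply Sx_int; auto. }
  set (h := fun y => sinc (T y) * g y).
  assert (Hhc : forall y, continuous h y).
  { intros y. apply c_mult; auto. apply c_comp; auto. apply sinc_cont. }
  assert (Hh : RInt h 0 eps = Si (T eps)).
  { rewrite (RI_derive (fun y => Si (T y))).
    - rewrite HT0. unfold Si at 2. rewrite RI_point. fR; ring.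
    - intros y _. unfold h. rewrite Rmult_comm. apply D_comp.
      + apply D_RInt, sinc_cont.
      + apply D_RInt; auto.
    - intros; auto. }
  assert (Hp1 : RInt (Sx g) 0 eps = Si (T eps) + RInt (fun y => Sx g y - h y) 0 eps).
  { rewrite RI_minus, Hh. fR. lra. apply Sx_int; auto. apply exRI_cont; auto. }
  assert (Hb1 : Rabs (RInt (fun y => Sx g y - h y) 0 eps) <= eps * (M * P)).
  { replace eps with (eps - 0) at 2 by ring.
    apply abs_RInt_le_const; [lra| |].
    - apply exRI_minus; [apply Sx_int; auto|apply exRI_cont; auto].
    - intros t Ht. 
      assert (HMP : 0 <= M * P) by (apply Rmult_le_pos; lra).
      destruct (Req_dec t 0) as [->|Ht0].
      + unfold Sx, h. destruct (Req_EM_T 0 0) as [_|E]; [|exfalso; auto].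
        rewrite HT0. unfold sinc. destruct (Req_EM_T 0 0) as [_|E]; [|exfalso; auto].
        replace (g 0 - 1 * g 0) with 0 by ring. rewrite Rabs_R0; auto.
      + assert (Htp : 0 < t) by lra.
        assert (HTt : t * gm <= T t) by (apply HTl; lra).
        assert (HTp : 0 < T t) by nra.
        assert (HX : Rabs (T t - t * g t) <= M * m * t * t).
        { unfold T. replace (t * g t) with ((t - 0) * g t) by ring. rewrite <- RI_const.
          rewrite <- RI_minus; [|apply exRI_cont; auto|apply exRI_cont; intros; apply exd_cont; auto_derive; auto].
          replace (M * m * t * t) with ((t - 0) * (M * m * t)) by ring.
          apply abs_RInt_le_const; [lra| |].
          - apply exRI_minus; [apply exRI_cont; auto|apply exRI_cont; intros; apply exd_cont; auto_derive; auto].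
          - intros s Hs. 
            assert (Hl := lip g g' 0 d (M * m) Hd Hc (fun t' Ht' => Hb t' 0 Ht' ltac:(lra)) t s ltac:(lra) ltac:(lra)).
            eapply Rle_trans; [exact Hl|].
            apply Rmult_le_compat_l. apply Rmult_le_pos; auto; unfold m; lra.
            rewrite Rabs_left1 by lra. lra. }
        assert (Ediff : Sx g t - h t = sin (T t) * (T t - t * g t) / (t * T t)).
        { unfold Sx, h, sinc. destruct (Req_EM_T t 0) as [E|_]; [exfalso; auto|].
          destruct (Req_EM_T (T t) 0) as [E|_]; [lra|]. change (RInt g 0 t) with (T t). fR. field. split; lra. }
        rewrite Ediff. unfold Rdiv. rewrite Rabs_mult, Rabs_mult.
        rewrite (Rabs_pos_eq (/ _)) by (apply Rlt_le, Rinv_0_lt_compat; nra).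
        apply (Rmult_le_reg_r (t * T t)); [nra|].
        rewrite Rmult_assoc, Rinv_l, Rmult_1_r by nra.
        assert (Hs := SIN_bound (T t)). 
        assert (Hs' : Rabs (sin (T t)) <= 1) by (apply Rabs_le; lra).
        assert (E2 : M * m = M * P * gm) by (unfold gm; field; lra).
        assert (Rabs (sin (T t)) * Rabs (T t - t * g t) <= Rabs (T t - t * g t)).
        { rewrite <- (Rmult_1_l (Rabs (T t - _))) at 2. apply Rmult_le_compat_r; auto. apply Rabs_pos. }
        assert (M * P * (t * t * gm) <= M * P * (t * T t)) by (apply Rmult_le_compat_l; nra).
        nra. }
  assert (Hb2 : Rabs (RInt (Sx g) eps d) <= 2 / (eps * gm) + d * P / (eps^2 * gm)).
  { assert (Hext : RInt (Sx g) eps d = RInt (fun y => sin (T y) * / y) eps d).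
    { apply RI_ext. intros y Hy. rewrite Rmin_left, Rmax_right in Hy by lra.
      unfold Sx. destruct (Req_EM_T y 0); [lra|reflexivity]. }
    set (F := fun y => - cos (T y) * / (y * g y)).
    set (sT := fun y => sin (T y) * / y).
    set (k2 := fun y => cos (T y) * (g y + y * g' y) * / ((y * g y) * (y * g y))).
    assert (Hpos : forall y, eps <= y <= d -> 0 < y * g y /\ eps * gm <= y * g y).
    { intros y Hy. assert (gm <= g y) by (apply Hlow; lra). split; nra. }
    assert (HsTc : forall y, eps <= y <= d -> continuous sT y).
    { intros y Hy. unfold sT. apply c_mult. apply c_comp; auto. apply exd_cont; auto_derive; auto.
      apply c_inv. apply exd_cont; auto_derive; auto. lra. }
    assert (Hk2c : forall y, eps <= y <= d -> continuous k2 y).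
    { intros y Hy. destruct (Hpos y Hy). unfold k2. apply c_mult. apply c_mult.
      apply c_comp; auto. apply exd_cont; auto_derive; auto.
      apply c_plus; auto. apply c_mult; auto. apply exd_cont; auto_derive; auto.
      apply c_inv. apply c_mult; apply c_mult; auto; apply exd_cont; auto_derive; auto. nra. }
    assert (HF : RInt (fun y => sT y + k2 y) eps d = F d - F eps).
    { apply RI_derive.
      - intros y Hy. rewrite Rmin_left, Rmax_right in Hy by lra. destruct (Hpos y Hy).
        eapply D_eq. apply D_mult.
        + apply (D_comp (fun z => - cos z) T). 
          * auto_derive; auto.
          * apply D_RInt; auto.
        + apply is_derive_inv. apply D_mult. apply (is_derive_id (K:=R_AbsRing)). apply Hd. lra.
        + unfold sT, k2. simpl. fR. assert (Hgy : 0 < g y) by (apply Rlt_le_trans with gm; [exact Hgm|apply Hlow; lra]). change one with 1. field. split; lra.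
      - intros y Hy. rewrite Rmin_left, Rmax_right in Hy by lra. apply c_plus; auto. }
    assert (Hk2 : RInt k2 eps d = (F d - F eps) - RInt sT eps d).
    { rewrite <- HF, <- RI_minus. apply RI_ext. intros; fR; ring.
      apply exRI_cont. intros y Hy; rewrite Rmin_left, Rmax_right in Hy by lra. apply c_plus; auto.
      apply exRI_cont. intros y Hy; rewrite Rmin_left, Rmax_right in Hy by lra. auto. }
    assert (HFb : forall y, eps <= y <= d -> Rabs (F y) <= 1 / (eps * gm)).
    { intros y Hy. destruct (Hpos y Hy). unfold F. rewrite Rabs_mult, Rabs_Ropp.
      rewrite (Rabs_pos_eq (/ _)) by (apply Rlt_le, Rinv_0_lt_compat; lra).
      assert (Hc' : Rabs (cos (T y)) <= 1) by (apply Rabs_le; apply COS_bound).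
      apply Rle_trans with (1 * / (y * g y)).
      apply Rmult_le_compat_r; [apply Rlt_le, Rinv_0_lt_compat; lra|auto].
      rewrite Rmult_1_l. unfold Rdiv; rewrite Rmult_1_l. apply Rinv_le_contravar; nra. }
    assert (Hk2b : Rabs (RInt k2 eps d) <= (d - eps) * (P / (eps^2 * gm))).
    { apply abs_RInt_le_const; [lra| |].
      - apply exRI_cont. intros y Hy; rewrite Rmin_left, Rmax_right in Hy by lra. auto.
      - intros y Hy. destruct (Hpos y Hy). assert (Hgy : gm <= g y) by (apply Hlow; lra).
        assert (Hg'y : Rabs (g' y) <= M * g y) by (apply Hb; lra).
        unfold k2. rewrite !Rabs_mult.
        rewrite (Rabs_pos_eq (/ _)) by (apply Rlt_le, Rinv_0_lt_compat; nra).
        assert (Hc' : Rabs (cos (T y)) <= 1) by (apply Rabs_le; apply COS_bound).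
        assert (H3 : Rabs (g y + y * g' y) <= g y * P).
        { eapply Rle_trans; [apply Rabs_triang|]. rewrite Rabs_mult, (Rabs_pos_eq y), (Rabs_pos_eq (g y)) by lra.
          unfold P. assert (y * Rabs (g' y) <= y * (M * g y)) by (apply Rmult_le_compat_l; lra).
          assert (y * (M * g y) <= d * (M * g y)) by (apply Rmult_le_compat_r; nra). nra. }
        apply Rle_trans with (g y * P * / (y * g y * (y * g y))).
        { apply Rmult_le_compat_r. apply Rlt_le, Rinv_0_lt_compat; nra.
          apply Rle_trans with (1 * Rabs (g y + y * g' y)). apply Rmult_le_compat_r; auto. apply Rabs_pos. lra. }
        replace (g y * P * / (y * g y * (y * g y))) with (P / (y * y * g y)) by (field; lra).
        unfold Rdiv. apply Rmult_le_compat_l; [lra|]. apply Rinv_le_contravar. apply Rmult_lt_0_compat; [apply pow_lt; lra|exact Hgm].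
        assert (eps * eps <= y * y) by nra. 
        replace (eps^2 * gm) with ((eps * eps) * gm) by ring. apply Rmult_le_compat; nra. }
    rewrite Hext. fold sT.
    assert (Hd1 := HFb d ltac:(lra)). assert (He1 := HFb eps ltac:(lra)).
    assert (E3 : RInt sT eps d = (F d - F eps) - RInt k2 eps d) by lra.
    rewrite E3. apply Rabs_le_between in Hd1. apply Rabs_le_between in He1. apply Rabs_le_between in Hk2b.
    assert ((d - eps) * (P / (eps ^ 2 * gm)) <= d * P / (eps ^ 2 * gm)).
    { unfold Rdiv. rewrite <- Rmult_assoc. apply Rmult_le_compat_r. apply Rlt_le, Rinv_0_lt_compat, Rmult_lt_0_compat; [apply pow_lt; lra|exact Hgm]. nra. }
    assert (2 / (eps * gm) = 1 / (eps * gm) + 1 / (eps * gm)) by (field; lra).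
    apply Rabs_le. lra. }
  assert (HSi := Si_bound (T eps) ltac:(specialize (HTl eps ltac:(lra)); nra)).
  assert (HSi2 : 2 / T eps <= 2 / (eps * gm)).
  { apply Rmult_le_compat_l; [lra|]. apply Rinv_le_contravar. nra. apply HTl; lra. }
  assert (E : (4 / eps + d * P / eps ^ 2) * (P / m) = 2 / (eps * gm) + 2 / (eps * gm) + d * P / (eps^2 * gm)).
  { unfold gm. field. repeat split; (lra || (apply Rgt_not_eq; assumption)). }
  fold P m. rewrite E, Hsplit, Hp1.
  apply Rabs_le_between in HSi. apply Rabs_le_between in Hb1. apply Rabs_le_between in Hb2.
  apply Rabs_le. lra.
Qed.

Definition fn (re im : nat -> R) n u := psum (fun k => 2 * im k / ((u - re k) ^ 2 + im k ^ 2)) n.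
Definition fn' (re im : nat -> R) n u :=
  psum (fun k => - (2 * im k) * (2 * (u - re k)) / ((u - re k) ^ 2 + im k ^ 2) ^ 2) n.

Lemma pos_den a s : 0 < s -> a * (a * 1) + s * (s * 1) <> 0.
Proof. intros H. apply Rgt_not_eq. rewrite !Rmult_1_r. assert (0 <= a * a) by apply Rle_0_sqr.
  assert (0 < s * s) by (apply Rmult_lt_0_compat; lra). lra. Qed.

Lemma pos_den2 a s : 0 < s -> a * a + s * s <> 0.
Proof. intros H. apply Rgt_not_eq. assert (0 <= a * a) by apply Rle_0_sqr.
  assert (0 < s * s) by (apply Rmult_lt_0_compat; lra). lra. Qed.

Lemma fn_derive re im (Him : forall k, 0 < im k) n u : is_derive (fn re im n) u (fn' re im n u).
Proof.
  induction n as [|n IH]; unfold fn, fn' in *; simpl.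
  - apply (is_derive_const (K:=R_AbsRing) (V:=R_NormedModule)).
  - apply (is_derive_plus (K:=R_AbsRing) (V:=R_NormedModule)
           (fun u => psum (fun k => 2 * im k / ((u - re k) ^ 2 + im k ^ 2)) n)
           (fun u => 2 * im n / ((u - re n) ^ 2 + im n ^ 2))); auto.
    specialize (Him n). auto_derive. apply pos_den; auto.
    fR. field. apply pos_den2; auto.
Qed.

Lemma fn'_cont re im (Him : forall k, 0 < im k) n u : continuous (fn' re im n) u.
Proof.
  induction n as [|n IH]; unfold fn' in *; simpl.
  - apply (continuous_const (U:=R_UniformSpace) (V:=R_UniformSpace)).
  - apply c_plus; auto. apply exd_cont. specialize (Him n). auto_derive. apply Rmult_integral_contrapositive_currified; [apply pos_den; auto|rewrite Rmult_1_r; apply pos_den; auto].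
Qed.

Lemma fn'_bound re im (Him : forall k, 0 < im k) n u : Rabs (fn' re im n u) <= 2 * varsigma_n im n.
Proof.
  induction n as [|n IH]; unfold fn', varsigma_n in *; simpl.
  - rewrite Rabs_R0; lra.
  - eapply Rle_trans; [apply Rabs_triang|]. rewrite Rmult_plus_distr_l.
    apply Rplus_le_compat; auto.
    specialize (Him n). set (s := im n) in *. set (w := u - re n). clearbody s w.
    assert (HD : 0 < w^2 + s^2) by nra.
    unfold Rdiv. rewrite Rabs_mult, Rabs_pos_eq with (x := / _) by (apply Rlt_le, Rinv_0_lt_compat; nra).
    assert (H1 : Rabs (- (2 * s) * (2 * w)) <= 2 * (w^2 + s^2)).
    { rewrite Rabs_mult, Rabs_Ropp, Rabs_mult, Rabs_mult, (Rabs_pos_eq 2), (Rabs_pos_eq s) by lra.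
      assert (Hq : 0 <= (s - Rabs w)^2) by apply pow2_ge_0. rewrite <- (pow2_abs w). revert Hq. generalize (Rabs w). intros a Hq. nra. }
    apply Rle_trans with (2 * (w^2 + s^2) * / (w ^ 2 + s ^ 2) ^ 2).
    + apply Rmult_le_compat_r; auto. apply Rlt_le, Rinv_0_lt_compat; nra.
    + replace (2 * (w^2 + s^2) * / (w ^ 2 + s ^ 2) ^ 2) with (2 * / (w^2 + s^2)) by (field; lra).
      apply Rmult_le_compat_l; [lra|]. apply Rinv_le_contravar. nra. nra.
Qed.

Lemma fn_lower re im (Him : forall k, 0 < im k) n u K : 2 * u^2 + 2 <= K ->
  2 / K * sigma_n re im n <= fn re im n u.
Proof.
  intros HK. induction n as [|n IH]; unfold fn, sigma_n in *; cbn [psum].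
  - rewrite Rmult_0_r; lra.
  - rewrite Rmult_plus_distr_l. apply Rplus_le_compat; auto.
    specialize (Him n). set (s := im n) in *. set (r := re n). clearbody s r.
    rewrite Rabs_pos_eq by lra.
    assert (HD : 0 < (u - r)^2 + s^2) by (assert (0 <= (u - r)^2) by apply pow2_ge_0; assert (0 < s^2) by (apply pow_lt; lra); lra).
    assert (HD2 : (u - r)^2 + s^2 <= K * (1 + (r^2 + s^2))).
    { assert ((u-r)^2 <= 2*u^2 + 2*r^2) by (assert (0 <= (u + r)^2) by apply pow2_ge_0; nra).
      assert (0 <= u^2) by apply pow2_ge_0. assert (0 <= r^2) by apply pow2_ge_0.
      assert (0 <= s^2) by apply pow2_ge_0.
      assert (0 <= (K - 2) * r^2) by (apply Rmult_le_pos; lra).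
      assert (0 <= (K - 1) * s^2) by (apply Rmult_le_pos; lra). nra. }
    assert (HK0 : 0 < K) by (assert (0 <= u^2) by apply pow2_ge_0; lra).
    assert (0 <= r^2) by apply pow2_ge_0. assert (0 <= s^2) by apply pow2_ge_0.
    assert (E : 2 / K * (s / (1 + (r ^ 2 + s ^ 2))) = 2 * s / (K * (1 + (r^2 + s^2)))) by (field; split; lra).
    rewrite E. unfold Rdiv. apply Rmult_le_compat_l; [lra|]. apply Rinv_le_contravar; auto.
Qed.

Lemma fn_cont re im (Him : forall k, 0 < im k) n u : continuous (fn re im n) u.
Proof. apply exd_cont. eexists. apply fn_derive; auto. Qed.

Lemma sigma_pos re im (Him : forall k, 0 < im k) n : (1 <= n)%nat -> 0 < sigma_n re im n.
Proof.
  intros Hn. induction n as [|n IH]; [lia|]. unfold sigma_n in *; cbn [psum].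
  assert (H : 0 < Rabs (im n) / (1 + (re n ^ 2 + im n ^ 2))).
  { specialize (Him n). rewrite Rabs_pos_eq by lra. apply Rdiv_lt_0_compat; [lra|].
    assert (0 <= re n ^2) by apply pow2_ge_0. assert (0 <= im n^2) by apply pow2_ge_0. lra. }
  destruct n. cbn [psum]. lra.
  assert (0 < psum (fun k => Rabs (im k) / (1 + (re k ^ 2 + im k ^ 2))) (S n)) by (apply IH; lia). lra.
Qed.

Lemma Rint_RInt f a b : ex_RInt f a b -> Rint f a b = RInt f a b.
Proof.
  intros H. unfold Rint.
  destruct (excluded_middle_informative (exists pr : Riemann_integrable f a b, True)) as [E|E].
  - symmetry. apply RInt_Reals.
  - exfalso. apply E. exists (ex_RInt_Reals_0 _ _ _ H). exact I.
Qed.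

Definition gd re im c x n y := fn re im n (x + c * y).
Definition gd' re im c x n y := c * fn' re im n (x + c * y).

Lemma gd_derive re im (Him : forall k, 0 < im k) c x n y :
  is_derive (gd re im c x n) y (gd' re im c x n y).
Proof.
  unfold gd, gd'. apply (D_comp (fn re im n) (fun y => x + c * y)).
  apply fn_derive; auto. auto_derive; auto. ring.
Qed.

Lemma gd'_cont re im (Him : forall k, 0 < im k) c x n y : continuous (gd' re im c x n) y.
Proof.
  unfold gd'. apply c_mult. apply exd_cont; auto_derive; auto.
  apply (c_comp (fun y => x + c * y) (fn' re im n)). apply exd_cont; auto_derive; auto.
  apply fn'_cont; auto.
Qed.

Lemma gd_cont re im (Him : forall k, 0 < im k) c x n y : continuous (gd re im c x n) y.
Proof. apply exd_cont. eexists. apply gd_derive; auto. Qed.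

Lemma integrand_eq re im (Him : forall k, 0 < im k) c x n y : c <> 0 -> y <> 0 ->
  sin (y * mu_n re im n (c * y) x) / y = Sx (gd re im c x n) y.
Proof.
  intros Hc Hy. unfold Sx. destruct (Req_EM_T y 0) as [E|_]; [contradiction|].
  f_equal. f_equal. unfold mu_n.
  rewrite Rint_RInt.
  2:{ apply exRI_cont. intros; apply (fn_cont re im Him n). }
  change (fun u => psum (fun k => 2 * im k / ((u - re k) ^ 2 + im k ^ 2)) n) with (fn re im n).
  assert (E1 : RInt (fun s => c * fn re im n (c * s + x)) 0 y = RInt (fn re im n) x (x + c * y)).
  { assert (H := RInt_comp_lin (V:=R_CompleteNormedModule) (fn re im n) c x 0 y
      ltac:(apply exRI_cont; intros; apply (fn_cont re im Him n))).
    rewrite Rmult_0_r, Rplus_0_l, (Rplus_comm (c*y) x) in H. exact H. }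
  assert (E2 : RInt (fun s => c * fn re im n (c * s + x)) 0 y = c * RInt (gd re im c x n) 0 y).
  { rewrite <- (RInt_scal (V:=R_CompleteNormedModule)).
    apply RI_ext. intros; unfold gd; simpl. unfold scal; simpl. unfold mult; simpl. f_equal. f_equal. ring.
    apply exRI_cont. intros; apply gd_cont; auto. }
  rewrite <- E1, E2. fR. field. split; auto.
Qed.

Lemma dir re im C c x delta :
  (forall k, 0 < im k) ->
  cv_infty (sigma_n re im) ->
  (forall n, (1 <= n)%nat -> varsigma_n im n / sigma_n re im n <= C) ->
  (c = 1 \/ c = -1) -> 0 < delta ->
  (forall n, ex_RInt (fun y => sin (y * mu_n re im n (c * y) x) / y) 0 delta) /\
  Un_cv (fun n => Rint (fun y => sin (y * mu_n re im n (c * y) x) / y) 0 delta) (PI / 2).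
Proof.
  intros Him Hinf Hrat Hc Hd.
  assert (Hc0 : c <> 0) by lra.
  assert (Hca : Rabs c = 1) by (destruct Hc as [-> | ->]; unfold Rabs; destruct (Rcase_abs _); lra).
  assert (Hext : forall n, RInt (fun y => sin (y * mu_n re im n (c * y) x) / y) 0 delta =
                           RInt (Sx (gd re im c x n)) 0 delta).
  { intros n. apply RI_ext. intros y Hy. rewrite Rmin_left, Rmax_right in Hy by lra.
    apply integrand_eq; auto; lra. }
  assert (Hex : forall n, ex_RInt (fun y => sin (y * mu_n re im n (c * y) x) / y) 0 delta).
  { intros n. apply (exRI_ext (Sx (gd re im c x n))).
    - intros y Hy. rewrite Rmin_left, Rmax_right in Hy by lra. symmetry; apply integrand_eq; auto; lra.
    - apply Sx_int. intros; apply gd_cont; auto. }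
  split; auto.
  set (K := 2 * (Rabs x + delta)^2 + 2).
  assert (HK : forall y, 0 <= y <= delta -> 2 * (x + c * y)^2 + 2 <= K).
  { intros y Hy. unfold K.
    assert (Rabs (x + c * y) <= Rabs x + delta).
    { eapply Rle_trans; [apply Rabs_triang|]. rewrite Rabs_mult, Hca, (Rabs_pos_eq y) by lra. lra. }
    rewrite <- (pow2_abs (x + c*y)). assert (0 <= Rabs (x + c * y)) by apply Rabs_pos. nra. }
  assert (HK0 : 2 <= K) by (unfold K; assert (0 <= (Rabs x + delta)^2) by apply pow2_ge_0; lra).
  set (M := Rabs C * K).
  assert (HM : 0 <= M) by (unfold M; apply Rmult_le_pos; [apply Rabs_pos|lra]).
  set (P := 1 + M * delta).
  assert (HP : 1 <= P) by (unfold P; nra).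
  intros eta Heta.
  set (e0 := Rmin delta (eta / (2 * (M * P + 1)))).
  assert (He0 : 0 < e0).
  { unfold e0. apply Rmin_glb_lt; auto. apply Rdiv_lt_0_compat; auto. nra. }
  assert (He0d : e0 <= delta) by apply Rmin_l.
  assert (He0e : e0 * (M * P) < eta / 2).
  { assert (H1 : e0 <= eta / (2 * (M * P + 1))) by apply Rmin_r.
    assert (HMP : 0 <= M * P) by nra.
    apply Rle_lt_trans with (eta / (2 * (M * P + 1)) * (M * P)).
    - apply Rmult_le_compat_r; auto.
    - apply (Rmult_lt_reg_r (2 * (M * P + 1))); [lra|].
      replace (eta / (2 * (M * P + 1)) * (M * P) * (2 * (M * P + 1))) with (eta * (M * P)) by (field; lra).
      nra. }
  set (W := (4 / e0 + delta * P / e0 ^ 2) * P).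
  assert (HW : 0 <= W).
  { unfold W. apply Rmult_le_pos; [|lra]. apply Rplus_le_le_0_compat.
    apply Rlt_le, Rdiv_lt_0_compat; lra. apply Rlt_le, Rdiv_lt_0_compat. nra. apply pow_lt; lra. }
  destruct (Hinf (K * W / eta)) as [N HN].
  exists (max N 1). intros n Hn.
  assert (Hn1 : (1 <= n)%nat) by lia.
  assert (Hsig : 0 < sigma_n re im n) by (apply sigma_pos; auto).
  assert (Hvs : varsigma_n im n <= C * sigma_n re im n).
  { specialize (Hrat n Hn1). apply (Rmult_le_compat_r (sigma_n re im n)) in Hrat; [|lra].
    unfold Rdiv in Hrat. rewrite Rmult_assoc, Rinv_l, Rmult_1_r in Hrat by lra. exact Hrat. }
  assert (Hlow : forall z, 0 <= z <= delta -> 2 / K * sigma_n re im n <= gd re im c x n z).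
  { intros z Hz. unfold gd. apply fn_lower; auto. }
  assert (Hg0 : 2 / K * sigma_n re im n <= gd re im c x n 0) by (apply Hlow; lra).
  assert (HKpos : 0 < 2 / K) by (apply Rdiv_lt_0_compat; lra).
  assert (Hg0p : 0 < gd re im c x n 0) by nra.
  assert (Hb : forall y z, 0 <= y <= delta -> 0 <= z <= delta ->
                 Rabs (gd' re im c x n y) <= M * gd re im c x n z).
  { intros y z Hy Hz. unfold gd'. rewrite Rabs_mult, Hca, Rmult_1_l.
    eapply Rle_trans; [apply fn'_bound; auto|].
    apply Rle_trans with (2 * (Rabs C * sigma_n re im n)).
    { assert (C <= Rabs C) by apply Rle_abs. nra. }
    apply Rle_trans with (M * (2 / K * sigma_n re im n)).
    { unfold M. right. field. lra. }
    apply Rmult_le_compat_l; auto. }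
  assert (HAL := AL (gd re im c x n) (gd' re im c x n) delta M e0
                  (gd_derive re im Him c x n) (gd'_cont re im Him c x n) Hd HM Hb Hg0p
                  (conj He0 He0d)).
  fold P in HAL. unfold Rdist. rewrite Rint_RInt by auto. rewrite Hext.
  eapply Rle_lt_trans; [exact HAL|].
  assert (HNn : (N <= n)%nat) by lia. specialize (HN n HNn).
  assert (H2 : (4 / e0 + delta * P / e0 ^ 2) * (P / gd re im c x n 0) = W / gd re im c x n 0).
  { unfold W. field. lra. }
  rewrite H2.
  assert (H3 : W / gd re im c x n 0 < eta / 2).
  { apply (Rmult_lt_reg_r (gd re im c x n 0)); auto.
    unfold Rdiv at 1. rewrite Rmult_assoc, Rinv_l, Rmult_1_r by lra.
    apply Rlt_le_trans with (eta / 2 * (2 / K * sigma_n re im n)).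
    - replace W with (eta / 2 * (2 / K * (K * W / eta))) by (field; lra).
      apply Rmult_lt_compat_l; [lra|]. apply Rmult_lt_compat_l; lra.
    - apply Rmult_le_compat_l; lra. }
  lra.
Qed.

Theorem lemma7 (re im : nat -> R) (C : R) :
  (forall k, 0 < im k) ->
  no_real_limit_points re im ->
  cv_infty (sigma_n re im) ->
  (forall n, (1 <= n)%nat -> varsigma_n im n / sigma_n re im n <= C) ->
  forall (delta x : R), 0 < delta ->
    (forall n, inhabited (Riemann_integrable (fun y => sin (y * mu_n re im n y x) / y) 0 delta)) /\
    (forall n, inhabited (Riemann_integrable (fun y => sin (y * mu_n re im n (- y) x) / y) 0 delta)) /\
    Un_cv (fun n => Rint (fun y => sin (y * mu_n re im n y x) / y) 0 delta) (PI / 2) /\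
    Un_cv (fun n => Rint (fun y => sin (y * mu_n re im n (- y) x) / y) 0 delta) (PI / 2).
Proof.
  intros Him _ Hinf Hrat delta x Hd.
  destruct (dir re im C 1 x delta Him Hinf Hrat (or_introl eq_refl) Hd) as [A1 B1].
  destruct (dir re im C (-1) x delta Him Hinf Hrat (or_intror eq_refl) Hd) as [A2 B2].
  assert (F1 : forall n, (fun y => sin (y * mu_n re im n (1 * y) x) / y) =
                         (fun y => sin (y * mu_n re im n y x) / y)).
  { intros n; apply functional_extensionality; intros y; rewrite Rmult_1_l; reflexivity. }
  assert (F2 : forall n, (fun y => sin (y * mu_n re im n (-1 * y) x) / y) =
                         (fun y => sin (y * mu_n re im n (- y) x) / y)).
  { intros n; apply functional_extensionality; intros y.
    replace (-1 * y) with (- y) by ring; reflexivity. }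
  split; [|split; [|split]].
  - intros n. constructor. apply ex_RInt_Reals_0. rewrite <- F1. apply A1.
  - intros n. constructor. apply ex_RInt_Reals_0. rewrite <- F2. apply A2.
  - intros e He. destruct (B1 e He) as [N HN]. exists N. intros n Hn.
    rewrite <- F1. apply HN; auto.
  - intros e He. destruct (B2 e He) as [N HN]. exists N. intros n Hn.
    rewrite <- F2. apply HN; auto.
Qed.
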